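(* Let $X$ be a BN with full support on the DAG $\mathcal G$ with states $\mathcal A$, $f:\mathcal A\to\mathcal B$ a surjection and $U_v=f(X_v)$. Suppose that for all $v\in V_p$, all $w,\tilde w\in\mathcal A^{pa(v)}$ with $f(w)=f(\tilde w)$ and all $b\in\mathcal B$, $$\mathbb P(U_v=b\mid X_{pa(v)}=w)=\mathbb P(U_v=b\mid X_{pa(v)}=\tilde w).$$ Then (D3) holds, and for every $v$ with $depth(v)\ge1$, every $w\in\mathcal A^{pa(v)}$, every $b\in\mathcal B$ and every initial distribution $\alpha$ with $\mathbb P_\alpha(U_{pa(v)}=f(w))>0$, $$\mathbb P_\alpha(U_v=b\mid U_{pa(v)}=f(w))=\mathbb P(U_v=b\mid X_{pa(v)}=w).$$
   Context: $\mathcal G=(V,E)$ is a finite DAG; $pa(v)$ parents; $V_s$ parentless vertices, $V_p=V\setminus V_s$; $depth(v)$ maximal number of edges of a directed path from a vertex of $V_s$ to $v$. A BN on $\mathcal G$ with states $\mathcal A$ (finite) is specified by distributions $\alpha_v$ on $\mathcal A$ for $v\in V_s$ and CPDs $P_v(\cdot\mid a_{pa(v)})$ for $v\in V_p$; law $\prod_{v\in V_s}\alpha_v(x_v)\prod_{v\in V_p}P_v(x_v\mid x_{pa(v)})$; full support: all $x\in\mathcal A^V$ have positive probability (so $\mathbb P(X_v=c\mid X_{pa(v)}=w)=P_v(c\mid w)$, and $\mathbb P(U_v=b\mid X_{pa(v)}=w)=\sum_{c\in f^{-1}(b)}P_v(c\mid w)$). $\mathbb P_\alpha$ is the law with the same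 CPDs and initial distribution $\alpha$. $f$ applied coordinatewise. (D3): for every initial distribution $\tilde\alpha$, $(U_v)$ under $\mathbb P_{\tilde\alpha}$ factorises over $\mathcal G$ (law of form $\prod_vq_v(u_v\mid u_{pa(v)})$), and for every $v\in V_p$, $b_v$, $b_{pa(v)}$ the value $\mathbb P_{\tilde\alpha}(U_v=b_v\mid U_{pa(v)}=b_{pa(v)})$ is the same for all $\tilde\alpha$ with $\mathbb P_{\tilde\alpha}(U_{pa(v)}=b_{pa(v)})>0$. *)

(* Defs.v *)
From mathcomp Require Import all_boot all_order all_algebra.
Set Implicit Arguments. Unset Strict Implicit. Unset Printing Implicit Defensive.
Import Order.TTheory GRing.Theory Num.Theory.
Local Open Scope ring_scope.

Section BN.
Variables (R : realFieldType) (V A : finType).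

Definition edge (pa : V -> {set V}) : rel V := fun a b => a \in pa b.

Definition acyclic (pa : V -> {set V}) : Prop :=
  forall u v, u \in pa v -> ~~ connect (edge pa) v u.

(* V_p : vertices with at least one parent; V_s : parentless vertices *)
Definition is_src (pa : V -> {set V}) (v : V) : bool := pa v == set0.

(* A CPD P v x c = P_v(c | x_{pa(v)}); only the parent coordinates of x matter *)
Definition cpd_family (pa : V -> {set V}) (P : V -> {ffun V -> A} -> A -> R) : Prop :=
  forall v, ~~ is_src pa v ->
    [/\ forall x y : {ffun V -> A}, (forall u, u \in pa v -> x u = y u) ->
          forall c, P v x c = P v y c,
        forall x c, 0 <= P v x c
      & forall x, \sum_(c : A) P v x c = 1].

Definition init_distr (pa : V -> {set V}) (alpha : V -> A -> R) : Prop :=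
  forall v, is_src pa v ->
    (forall c, 0 <= alpha v c) /\ \sum_(c : A) alpha v c = 1.

Definition bn_law (pa : V -> {set V}) (alpha : V -> A -> R)
  (P : V -> {ffun V -> A} -> A -> R) (x : {ffun V -> A}) : R :=
  (\prod_(v | is_src pa v) alpha v (x v)) *
  (\prod_(v | ~~ is_src pa v) P v x (x v)).

Definition prob (p : {ffun V -> A} -> R) (E : pred {ffun V -> A}) : R :=
  \sum_(x | E x) p x.

Definition condprob (p : {ffun V -> A} -> R) (E F : pred {ffun V -> A}) : R :=
  prob p [pred x | E x && F x] / prob p F.

Variables (B : finType) (f : A -> B).

Definition Xpa_eq (pa : V -> {set V}) (v : V) (w : {ffun V -> A}) : pred {ffun V -> A} :=
  fun x => [forall u in pa v, x u == w u].
Definition Upa_eq (pa : V -> {set V}) (v : V) (bb : {ffun V -> B}) : pred {ffun V -> A} :=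
  fun x => [forall u in pa v, f (x u) == bb u].
Definition Uv_eq (v : V) (b : B) : pred {ffun V -> A} := fun x => f (x v) == b.
Definition U_eq (bb : {ffun V -> B}) : pred {ffun V -> A} :=
  fun x => [forall u, f (x u) == bb u].

Definition fimg (w : {ffun V -> A}) : {ffun V -> B} := [ffun u => f (w u)].

Definition U_factorises (pa : V -> {set V}) (p : {ffun V -> A} -> R) : Prop :=
  exists q : V -> {ffun V -> B} -> B -> R,
    [/\ forall v (bb bb' : {ffun V -> B}), (forall u, u \in pa v -> bb u = bb' u) ->
          forall b, q v bb b = q v bb' b,
        forall v bb b, 0 <= q v bb b,
        forall v bb, \sum_(b : B) q v bb b = 1
      & forall bb : {ffun V -> B}, prob p (U_eq bb) = \prod_(v : V) q v bb (bb v)].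

Definition D3 (pa : V -> {set V}) (P : V -> {ffun V -> A} -> A -> R) : Prop :=
  (forall alpha, init_distr pa alpha -> U_factorises pa (bn_law pa alpha P)) /\
  (forall alpha1 alpha2, init_distr pa alpha1 -> init_distr pa alpha2 ->
     forall v, ~~ is_src pa v -> forall (bv : B) (bpa : {ffun V -> B}),
       0 < prob (bn_law pa alpha1 P) (Upa_eq pa v bpa) ->
       0 < prob (bn_law pa alpha2 P) (Upa_eq pa v bpa) ->
       condprob (bn_law pa alpha1 P) (Uv_eq v bv) (Upa_eq pa v bpa) =
       condprob (bn_law pa alpha2 P) (Uv_eq v bv) (Upa_eq pa v bpa)).

End BN.

(* Main.v *)
Require Import Defs.
From mathcomp Require Import all_boot all_order all_algebra.
Set Implicit Arguments. Unset Strict Implicit. Unset Printing Implicit Defensive.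
From mathcomp Require Import lra.
Import Order.TTheory GRing.Theory Num.Theory.
Local Open Scope ring_scope.

Section Elim.
Variables (R : realFieldType) (V A : finType) (pa : V -> {set V}).
Local Notation T := {ffun V -> A}.

Definition upd (x : T) (v : V) (c : A) : T := [ffun u => if u == v then c else x u].

Lemma upd_v x v c : upd x v c v = c.
Proof. by rewrite ffunE eqxx. Qed.
Lemma upd_ne x v c u : u != v -> upd x v c u = x u.
Proof. by rewrite ffunE => /negbTE ->. Qed.

Definition sw (a c y : A) : A := if y == a then c else if y == c then a else y.
Lemma swK a c : involutive (sw a c).
Proof.
move=> y; rewrite /sw.
by repeat (case: eqP => //=); intros; subst; try congruence.
Qed.

Lemma sum_part (phi : T -> R) v c a :
  \sum_(y : T | y v == c) phi y = \sum_(x : T | x v == a) phi (upd x v c).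
Proof.
pose tau (x : T) : T := upd x v (sw a c (x v)).
have tauK : involutive tau.
  move=> x; apply/ffunP => u; rewrite /tau !ffunE.
  case: (eqVneq u v) => [->|//]; by rewrite eqxx swK.
rewrite (reindex_inj (can_inj tauK)).
have E : forall x, (tau x v == c) = (x v == a).
  move=> x; rewrite /tau upd_v /sw.
  by repeat (case: eqP => //=); intros; subst; try congruence.
apply: eq_big => // x; rewrite E => /eqP xa.
by rewrite /tau xa /sw eqxx.
Qed.

Lemma pair_sum (phi : T -> R) v a :
  \sum_x phi x = \sum_(x : T) ((x v == a)%:R * \sum_(c : A) phi (upd x v c)).
Proof.
rewrite (partition_big (fun y : T => y v) predT) //=.
under eq_bigr => c _ do rewrite (sum_part phi v c a).
rewrite exchange_big /= big_mkcond /=.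
apply: eq_bigr => x _; case: (x v == a); by rewrite ?mul1r ?mul0r // big1.
Qed.


Hypothesis acyc : acyclic pa.

Definition closedD (D : {set V}) := forall u p, p \in pa u -> p \in D -> u \in D.
Definition local (K : V -> T -> R) := forall u (x y : T), x u = y u ->
  (forall p, p \in pa u -> x p = y p) -> K u x = K u y.

Lemma notpa v : v \notin pa v.
Proof. by apply/negP => /acyc; rewrite connect0. Qed.

Lemma minimal_exists (D : {set V}) v0 : v0 \in D ->
  exists2 v, v \in D & forall p, p \in pa v -> p \notin D.
Proof.
move=> v0D.
pose anc v := [set u | connect (edge pa) u v].
case: (arg_minnP (fun v => #|anc v|) v0D) => v vD vmin.
exists v => // p ppa; apply/negP => pD.
have := vmin p pD; rewrite leqNgt => /negP; apply; apply: proper_card.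
apply/properP; split.
  apply/subsetP => u; rewrite !inE => up.
  by apply: connect_trans up (connect1 _).
exists v; first by rewrite inE connect0.
by rewrite inE; apply: acyc.
Qed.

Lemma elim (K : V -> T -> R) (s : V -> R) (x0 : T) (D : {set V}) :
  local K -> closedD D ->
  (forall v x, v \in D -> (forall p, p \in pa v -> K p x != 0) ->
     \sum_(c : A) K v (upd x v c) = s v) ->
  \sum_(x : T) \prod_(u : V) K u x =
  \sum_(x : T) (\prod_(u | u \notin D) K u x *
                 \prod_(u in D) (s u * (x u == x0 u)%:R)).
Proof.
move=> Kloc.
have [n] := ubnP #|D|; elim: n D => // n IH D ltD clD hs.
case: (set_0Vmem D) => [->|[v0 v0D]].
  apply: eq_bigr => x _; rewrite big_set0 mulr1.
  by apply: eq_bigl => u; rewrite inE.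
have [v vD vmin] := minimal_exists v0D.
pose D' := D :\ v.
have D'v : v \notin D' by rewrite !inE eqxx.
have clD' : closedD D'.
  move=> u p ppa; rewrite !inE => /andP [pv pD].
  have uD := clD u p ppa pD; rewrite uD andbT.
  by apply/eqP => uv; move: (vmin p); rewrite -uv ppa pD => /(_ isT).
rewrite (IH D') //; last first.
  - by move=> w x; rewrite inE => /andP [_ ]; apply: hs.
  - by move: ltD; rewrite (cardsD1 v D) vD add1n ltnS.
pose t u (x : T) := s u * (x u == x0 u)%:R.
pose H (x : T) := \prod_(u | u \notin D) K u x * \prod_(u in D') t u x.
have E1 : forall x : T, \prod_(u | u \notin D') K u x * \prod_(u in D') t u x
     = K v x * H x.
  move=> x; rewrite (bigD1 v) //= mulrA; congr (_ * _ * _).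
  apply: eq_bigl => u; rewrite !inE.
  by case: (eqVneq u v) => [->|_] /=; rewrite ?vD ?andbT ?eqxx.
have E2 : forall x : T, \prod_(u | u \notin D) K u x * \prod_(u in D) t u x
     = t v x * H x.
  move=> x; rewrite (bigD1 v vD) /= mulrCA; congr (_ * (_ * _)).
  by apply: eq_bigl => u; rewrite !inE andbC.
have Hinv : forall x c, H (upd x v c) = H x.
  move=> x c; rewrite /H; congr (_ * _).
    apply: eq_bigr => u uD; apply: Kloc.
      by rewrite upd_ne //; apply: contraNneq uD => ->.
    move=> p ppa; rewrite upd_ne //; apply/eqP => pv.
    by move: uD; rewrite (clD u p ppa) // pv.
  apply: eq_bigr => u; rewrite !inE => /andP [uv _].
  by rewrite /t upd_ne.
under eq_bigr => x _ do rewrite E1.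
under [RHS]eq_bigr => x _ do rewrite E2.
rewrite (pair_sum _ v (x0 v)) [RHS](pair_sum _ v (x0 v)).
apply: eq_bigr => x _; congr (_ * _).
under eq_bigr => c _ do rewrite Hinv.
under [RHS]eq_bigr => c _ do rewrite Hinv.
rewrite -!mulr_suml.
have [H0|Hn0] := eqVneq (H x) 0; first by rewrite H0 !mulr0.
congr (_ * _).
have -> : \sum_(c : A) t v (upd x v c) = s v.
  rewrite /t (bigD1 (x0 v)) //= upd_v eqxx mulr1 big1 ?addr0 // => c cx.
  by rewrite upd_v (negbTE cx) mulr0.
apply: hs => // p ppa; apply: contraNneq Hn0 => Kp0.
rewrite /H (bigD1 p) /=; last exact: vmin.
by rewrite Kp0 !mul0r.
Qed.

End Elim.

Lemma prod_bool (R : realFieldType) (I : finType) (b : pred I) :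
  \prod_(i : I) ((b i)%:R : R) = ([forall i, b i])%:R.
Proof.
case: (boolP [forall i, b i]) => H.
  by rewrite big1 // => i _; rewrite (forallP H).
case/forallPn: H => i bi.
by rewrite (bigD1 i) //= (negbTE bi) mul0r.
Qed.

Lemma probE (R : realFieldType) (V A : finType) (p : {ffun V -> A} -> R) (E : pred {ffun V -> A}) :
  prob p E = \sum_x ((E x)%:R * p x).
Proof.
rewrite /prob big_mkcond /=; apply: eq_bigr => x _.
by case: (E x); rewrite ?mul1r ?mul0r.
Qed.

Lemma prob_pos (R : realFieldType) (V A : finType) (p : {ffun V -> A} -> R) (E : pred {ffun V -> A}) w :
  (forall x, 0 < p x) -> E w -> 0 < prob p E.
Proof.
move=> pos Ew; rewrite /prob (bigD1 w) //=.
have := pos w; have : 0 <= \sum_(i | E i && (i != w)) p i.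
  by apply: sumr_ge0 => i _; apply: ltW.
move=> h1 h2; lra.
Qed.

Lemma prob_ex (R : realFieldType) (V A : finType) (p : {ffun V -> A} -> R) (E : pred {ffun V -> A}) :
  0 < prob p E -> exists x, E x.
Proof.
move=> pos; case: (boolP [exists x, E x]) => [/existsP//|].
rewrite negb_exists => /forallP H.
by move: pos; rewrite /prob big_pred0 ?ltxx // => x; apply/negbTE.
Qed.

Section BN2.
Variables (R : realFieldType) (V A : finType) (pa : V -> {set V}).
Variable (P : V -> {ffun V -> A} -> A -> R).
Hypothesis acyc : acyclic pa.
Hypothesis cpd : cpd_family pa P.
Local Notation T := {ffun V -> A}.

Definition Kal (alpha : V -> A -> R) v (x : T) :=
  if is_src pa v then alpha v (x v) else P v x (x v).

Lemma bn_lawE alpha x : bn_law pa alpha P x = \prod_v Kal alpha v x.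
Proof.
rewrite /bn_law [RHS](bigID (fun v => is_src pa v)) /=; congr (_ * _).
  by apply: eq_bigr => v sv; rewrite /Kal sv.
by apply: eq_bigr => v /negbTE sv; rewrite /Kal sv.
Qed.

Lemma P_upd v x c : ~~ is_src pa v -> P v (upd x v c) c = P v x c.
Proof.
move=> nv; have [h _ _] := cpd nv; apply: h => u upa.
rewrite upd_ne //; apply/eqP => uv; move: upa; by rewrite uv (negbTE (notpa acyc v)).
Qed.

Lemma Kal_local alpha : local pa (Kal alpha).
Proof.
move=> u x y xy pxy; rewrite /Kal; case: ifP => nu; first by rewrite xy.
have [h _ _] := cpd (negbT nu); rewrite xy; exact: h.
Qed.

Lemma Kal_norm alpha : init_distr pa alpha -> forall v x,
  \sum_(c : A) Kal alpha v (upd x v c) = 1.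
Proof.
move=> ia v x; rewrite /Kal; case sv: (is_src pa v).
  under eq_bigr => c _ do rewrite (upd_v x v c).
  by case: (ia v sv).
under eq_bigr => c _ do rewrite (upd_v x v c) P_upd ?sv //.
by case: (cpd (negbT sv)).
Qed.

Lemma Cond alpha v (S : pred A) (e : V -> A -> bool) (w : T) (Q : R) :
  init_distr pa alpha -> ~~ is_src pa v ->
  (forall x : T, (forall p, p \in pa v -> e p (x p)) ->
     \sum_(c | S c) P v x c = Q) ->
  prob (bn_law pa alpha P) [pred x : T | S (x v) && [forall u in pa v, e u (x u)]] =
  Q * prob (bn_law pa alpha P) (fun x : T => [forall u in pa v, e u (x u)]).
Proof.
move=> ia nv hQ.
pose D := [set u | connect (edge pa) v u].
have clD : closedD pa D.
  move=> u p ppa; rewrite !inE => vp.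
  by apply: connect_trans vp (connect1 _).
have Dpa : forall u, u \in D -> u \notin pa v.
  by move=> u; rewrite inE => vu; apply/negP => /acyc; rewrite vu.
have vD : v \in D by rewrite inE connect0.
pose ind u (x : T) : R := ((u \in pa v) ==> e u (x u))%:R.
pose K1 u (x : T) := (if u == v then ((S (x u))%:R : R) else 1) * ind u x * Kal alpha u x.
pose K2 u (x : T) := ind u x * Kal alpha u x.
have indloc : forall u (x y : T), x u = y u -> ind u x = ind u y.
  by move=> u x y xy; rewrite /ind xy.
have indD : forall u (x : T), u \in D -> ind u x = 1.
  by move=> u x uD; rewrite /ind (negbTE (Dpa u uD)).
have e1 : prob (bn_law pa alpha P)
     [pred x : T | S (x v) && [forall u in pa v, e u (x u)]] = \sum_x \prod_u K1 u x.
  rewrite probE; apply: eq_bigr => x _.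
  rewrite /K1 big_split big_split /= prod_bool bn_lawE /=.
  have -> : \prod_i (if i == v then ((S (x i))%:R : R) else 1) = (S (x v))%:R.
    by rewrite (bigD1 v) //= eqxx big1 ?mulr1 // => u /negbTE ->.
  by case: (S (x v)); rewrite /= ?mul1r ?mul0r.
have e2 : prob (bn_law pa alpha P)
     (fun x : T => [forall u in pa v, e u (x u)]) = \sum_x \prod_u K2 u x.
  rewrite probE; apply: eq_bigr => x _.
  by rewrite /K2 big_split /= prod_bool bn_lawE.
rewrite e1 e2.
have hl1 : local pa K1.
  by move=> u x y xy hxy; rewrite /K1 xy (indloc u x y xy) (Kal_local alpha xy hxy).
have hl2 : local pa K2.
  by move=> u x y xy hxy; rewrite /K2 (indloc u x y xy) (Kal_local alpha xy hxy).
have hn1 : forall u x, u \in D -> (forall p, p \in pa u -> K1 p x != 0) ->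
    \sum_(c : A) K1 u (upd x u c) = (fun u => if u == v then Q else 1) u.
  move=> u x uD hp; rewrite /K1.
  under eq_bigr => c _ do rewrite indD //.
  case: (eqVneq u v) hp => [->|uv] hp.
    under eq_bigr => c _ do rewrite mulr1 upd_v.
    rewrite -(hQ x).
      rewrite [RHS]big_mkcond; apply: eq_bigr => c _.
      by rewrite /Kal (negbTE nv) upd_v P_upd //; case: (S c); rewrite ?mul1r ?mul0r.
    move=> p ppa; have := hp p ppa; rewrite /K1.
    have -> : (p == v) = false.
      by apply/negbTE/eqP => pv; move: ppa; rewrite pv (negbTE (notpa acyc v)).
    by rewrite mul1r /ind ppa /=; case: (e p (x p)); rewrite // mul0r eqxx.
  under eq_bigr => c _ do rewrite mul1r mul1r.
  exact: Kal_norm.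
have hn2 : forall u x, u \in D -> (forall p, p \in pa u -> K2 p x != 0) ->
    \sum_(c : A) K2 u (upd x u c) = (fun _ => 1) u.
  move=> u x uD hp; rewrite /K2.
  under eq_bigr => c _ do rewrite indD // mul1r.
  exact: Kal_norm.
rewrite (elim acyc w hl1 clD hn1) (elim acyc w hl2 clD hn2).
rewrite mulr_sumr; apply: eq_bigr => x _.
have -> : \prod_(u | u \notin D) K1 u x = \prod_(u | u \notin D) K2 u x.
  apply: eq_bigr => u uD; rewrite /K1 /K2.
  have -> : (u == v) = false by apply/negbTE; apply: contraNneq uD => ->.
  by rewrite mul1r.
have -> : \prod_(u in D) ((if u == v then Q else 1) * ((x u == w u)%:R : R))
    = Q * \prod_(u in D) (1 * ((x u == w u)%:R : R)).
  rewrite big_split [X in _ = _ * X]big_split /= (bigD1 v vD) /= eqxx.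
  rewrite big1 ?mulr1 ?mulrA ?[X in _ = _ * X * _]big1 ?mulr1 //.
  by move=> u /andP [_ /negbTE ->].
by rewrite mulrCA.
Qed.

End BN2.

Lemma prodT (R : realFieldType) (V : finType) (F : V -> R) :
  \prod_(u in [set: V]) F u = \prod_u F u.
Proof. by apply: eq_bigl => u; rewrite inE. Qed.

Unset Implicit Arguments.

Theorem mainTheorem11 (R : realFieldType) (V A B : finType)
  (pa : V -> {set V}) (alpha0 : V -> A -> R) (P : V -> {ffun V -> A} -> A -> R)
  (f : A -> B) :
  acyclic pa ->
  init_distr pa alpha0 ->
  cpd_family pa P ->
  (forall x : {ffun V -> A}, 0 < bn_law pa alpha0 P x) ->
  (forall b : B, exists a : A, f a = b) ->
  (forall v, ~~ is_src pa v -> forall w w' : {ffun V -> A},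
     (forall u, u \in pa v -> f (w u) = f (w' u)) -> forall b : B,
     condprob (bn_law pa alpha0 P) (Uv_eq f v b) (Xpa_eq pa v w) =
     condprob (bn_law pa alpha0 P) (Uv_eq f v b) (Xpa_eq pa v w')) ->
  D3 f pa P /\
  (forall v, ~~ is_src pa v -> forall (w : {ffun V -> A}) (b : B) alpha,
     init_distr pa alpha ->
     0 < prob (bn_law pa alpha P) (Upa_eq f pa v (fimg f w)) ->
     condprob (bn_law pa alpha P) (Uv_eq f v b) (Upa_eq f pa v (fimg f w)) =
     condprob (bn_law pa alpha0 P) (Uv_eq f v b) (Xpa_eq pa v w)).
Proof.
move=> acyc ia0 cpd pos0 surj hyp.
pose Qf v (w : {ffun V -> A}) b := \sum_(c | f c == b) P v w c.
have CP : forall alpha v b (e : V -> A -> bool) (w : {ffun V -> A}) Q,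
    init_distr pa alpha -> ~~ is_src pa v ->
    (forall x : {ffun V -> A}, (forall p, p \in pa v -> e p (x p)) ->
        \sum_(c | f c == b) P v x c = Q) ->
    prob (bn_law pa alpha P) (fun x => [forall u in pa v, e u (x u)]) != 0 ->
    condprob (bn_law pa alpha P) (Uv_eq f v b)
      (fun x => [forall u in pa v, e u (x u)]) = Q.
  move=> alpha v b e w Q ia nv hQ nz; rewrite /condprob.
  transitivity (Q * prob (bn_law pa alpha P) (fun x => [forall u in pa v, e u (x u)])
     / prob (bn_law pa alpha P) (fun x => [forall u in pa v, e u (x u)])).
    congr (_ / _); exact: (Cond (S := fun c => f c == b) acyc cpd w ia nv hQ).
  by rewrite mulfK.
have QX : forall v, ~~ is_src pa v -> forall w b,
    condprob (bn_law pa alpha0 P) (Uv_eq f v b) (Xpa_eq pa v w) = Qf v w b.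
  move=> v nv w b.
  apply: (CP alpha0 v b (fun u a => a == w u) w) => //.
    move=> x hx; apply: eq_bigr => c _; have [h _ _] := cpd v nv.
    by apply: h => u up; apply/eqP; apply: hx.
  rewrite gt_eqF //; apply: (prob_pos (w := w) pos0).
  by apply/forallP => u; apply/implyP.
have Qinv : forall v, ~~ is_src pa v -> forall w w' : {ffun V -> A}, forall b,
    (forall u, u \in pa v -> f (w u) = f (w' u)) -> Qf v w b = Qf v w' b.
  by move=> v nv w w' b hw; rewrite -!QX //; apply: hyp.
have QU : forall alpha v b (bb : {ffun V -> B}) (w : {ffun V -> A}), init_distr pa alpha ->
    ~~ is_src pa v -> (forall u, u \in pa v -> f (w u) = bb u) ->
    0 < prob (bn_law pa alpha P) (Upa_eq f pa v bb) ->
    condprob (bn_law pa alpha P) (Uv_eq f v b) (Upa_eq f pa v bb) = Qf v w b.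
  move=> alpha v b bb w ia nv hw pos.
  apply: (CP alpha v b (fun u a => f a == bb u) w) => //.
    move=> x hx; apply: (Qinv v nv x w b) => u up.
    by rewrite hw // (eqP (hx u up)).
  by rewrite gt_eqF.
split; last first.
  move=> v nv w b alpha ia pos; rewrite QX //.
  by apply: QU => // u _; rewrite ffunE.
split; last first.
  move=> a1 a2 ia1 ia2 v nv bv bpa p1 p2.
  have [x1 hx1] := prob_ex p1.
  have hx : forall u, u \in pa v -> f (x1 u) = bpa u.
    by move=> u up; apply/eqP; move: (forallP hx1 u); rewrite up.
  by rewrite (QU a1 v bv bpa x1) // (QU a2 v bv bpa x1).
move=> alpha ia.
have surjb : forall b, exists a, f a == b.
  by move=> b; case: (surj b) => a <-; exists a.
pose g b := xchoose (surjb b).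
have hg : forall b, f (g b) = b by move=> b; apply/eqP; exact: (xchooseP (surjb b)).
pose wit (bb : {ffun V -> B}) : {ffun V -> A} := [ffun u => g (bb u)].
pose q v (bb : {ffun V -> B}) b :=
  if is_src pa v then \sum_(c | f c == b) alpha v c else Qf v (wit bb) b.
exists q; split.
- move=> v bb bb' hbb b; rewrite /q; case sv: (is_src pa v) => //.
  apply: eq_bigr => c _; have [h _ _] := cpd v (negbT sv).
  by apply: h => u up; rewrite !ffunE hbb.
- move=> v bb b; rewrite /q; case sv: (is_src pa v).
    by apply: sumr_ge0 => c _; case: (ia v sv).
  by apply: sumr_ge0 => c _; case: (cpd v (negbT sv)).
- move=> v bb; rewrite /q; case sv: (is_src pa v).
    case: (ia v sv) => _ <-; rewrite [RHS](partition_big f predT) //=.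
  case: (cpd v (negbT sv)) => _ _ /(_ (wit bb)) <-; rewrite [RHS](partition_big f predT) //=.
move=> bb.
pose K3 u (x : {ffun V -> A}) := ((f (x u) == bb u)%:R : R) * Kal pa P alpha u x.
have e3 : prob (bn_law pa alpha P) (U_eq f bb) = \sum_x \prod_u K3 u x.
  rewrite probE; apply: eq_bigr => x _.
  by rewrite /K3 big_split /= prod_bool bn_lawE.
have hl3 : local pa K3.
  by move=> u x y xy hxy; rewrite /K3 xy (Kal_local cpd alpha xy hxy).
have clT : closedD pa [set: V] by move=> u p _ _; rewrite inE.
have hn3 : forall u x, u \in [set: V] -> (forall p, p \in pa u -> K3 p x != 0) ->
    \sum_(c : A) K3 u (upd x u c) = (fun u => q u bb (bb u)) u.
  move=> u x _ hp; rewrite /K3 /q /Kal.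
  under eq_bigr => c _ do rewrite upd_v.
  case sv: (is_src pa u).
    by rewrite [RHS]big_mkcond; apply: eq_bigr => c _; case: (f c == bb u);
      rewrite ?mul1r ?mul0r.
  rewrite -(Qinv u (negbT sv) x); last first.
    move=> p pp; rewrite ffunE hg; apply/eqP; have := hp p pp; rewrite /K3.
    by case: (f (x p) == bb p); rewrite ?mul0r ?eqxx.
  rewrite [RHS]big_mkcond; apply: eq_bigr => c _.
  rewrite (P_upd acyc cpd) ?sv //.
  by case: (f c == bb u); rewrite ?mul1r ?mul0r.
rewrite e3 (elim acyc (wit bb) hl3 clT hn3).
have h0 : forall x, \prod_(u | u \notin [set: V]) K3 u x = 1.
  by move=> x; rewrite big_pred0 // => u; rewrite inE.
transitivity (\sum_(x : {ffun V -> A}) (\prod_(u in [set: V]) q u bb (bb u) *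
   \prod_(u in [set: V]) ((x u == wit bb u)%:R : R))).
  by apply: eq_bigr => x _; rewrite h0 mul1r big_split.
rewrite -mulr_sumr prodT mulrC.
have -> : \sum_(x : {ffun V -> A}) \prod_(u in [set: V]) ((x u == wit bb u)%:R : R) = 1.
  rewrite (bigD1 (wit bb)) //= [X in _ + X]big1 ?addr0.
    by rewrite big1 // => u _; rewrite eqxx.
  move=> x xw; rewrite prodT prod_bool.
  case: (boolP [forall i, x i == wit bb i]) => // /forallP h.
  have xe : x = wit bb by apply/ffunP => u; apply/eqP.
  by rewrite xe eqxx in xw.
by rewrite mul1r.
Qed.
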